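(* In the two-parallel-path setting with the linear decision rule, suppose $l_v=0$ for all vertices, $m<n$, all initial pheromone levels are positive, $f_s(t)=\lambda^tf_s(0)$ and $b_d(t)=\lambda^tb_d(0)$ with $\lambda>1$ and $f_s(0),b_d(0)>0$, and the initial flows at vertices other than $s,d$ satisfy $f_v(0)\le f_s(0)$, $b_v(0)\le b_d(0)$. Let $T_1=\max_{(u,v)\in E}\log(p_{uv}(0)/(f_s(0)+b_d(0)))/\log(1/\delta)$. Then for every integer $t\ge L+\max(0,T_1)$, $$r_{\min}(t+L)\ \ge\ \left(1+\frac{\min(f_s(0),b_d(0))\,(1-\delta)(\lambda-1)}{6\,(f_s(0)+b_d(0))\,\lambda^{m}}\right)r_{\min}(t).$$
   Context: Model (linear decision rule). Directed graph $G=(V,E)$, source $s$, destination $d$, discrete time; pheromone $p_{uv}(t)$, forward flows $f_v(t)$, backward flows $b_v(t)$; leakages $l_v\in[0,1]$; decay $\delta\in(0,1)$; exogenous inputs $f_s(t),b_d(t)$. Edge flows: $f_{uv}(t)=f_u(t)p_{uv}(t)/\sum_{z:(u,z)\in E}p_{uz}(t)$, $b_{uv}(t)=b_v(t)p_{uv}(t)/\sum_{z:(z,v)\in E}p_{zv}(t)$ (at a vertex with a single outgoing, resp. incoming, edge the whole flow goes along it). Updates: $f_v(t+1)=(1-l_v)\sum_{z:(z,v)\in E}f_{zv}(t)$ for $v\neq s$, $b_u(t+1)=(1-l_u)\sum_{z:(u,z)\in E}b_{uz}(t)$ for $u\ne d$, $p_{uv}(t+1)=\delta(p_{uv}(t)+f_{uv}(t)+b_{uv}(t))$.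 Two parallel paths: $G$ is the union of directed paths $P_1,P_2$ from $s$ to $d$ sharing only $s,d$; $s_1,s_2$ are the successors of $s$ and $d_1,d_2$ the predecessors of $d$ on $P_1,P_2$; $m=\mathrm{len}(P_1)$, $n=\mathrm{len}(P_2)$ (numbers of edges), $L=\max(m,n)$. Potential: $r_{ss_1}(t)=p_{ss_1}(t)/p_{ss_2}(t)$, $r_{d_1d}(t)=p_{d_1d}(t)/p_{d_2d}(t)$, and for $t\ge L$, $r_{\min}(t)=\min\{r_{ss_1}(t-i),\,r_{d_1d}(t-i):0\le i\le L-1\}$. *)

(* Defs.v *)
From HB Require Import structures.
From mathcomp Require Import all_boot all_order all_algebra.
From mathcomp Require Import reals exp.
Set Implicit Arguments. Unset Strict Implicit. Unset Printing Implicit Defensive.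
Import Order.TTheory GRing.Theory Num.Theory.
Local Open Scope ring_scope.

Section Model.
Variables (R : realType) (V : finType) (E : rel V).

Definition out_sum (p : V -> V -> R) (u : V) : R := \sum_(z | E u z) p u z.
Definition in_sum (p : V -> V -> R) (v : V) : R := \sum_(z | E z v) p z v.

Definition fwd_edge_flow (p : V -> V -> R) (f : V -> R) (u v : V) : R :=
  if #|[pred z | E u z]| == 1%N then f u else f u * p u v / out_sum p u.

Definition bwd_edge_flow (p : V -> V -> R) (b : V -> R) (u v : V) : R :=
  if #|[pred z | E z v]| == 1%N then b v else b v * p u v / in_sum p v.

(* The exogenous inputs f_s(t),
   b_d(t) are the values f t s, b t d (not constrained by the update rules). *)
Definition is_trajectory (s d : V) (l : V -> R) (delta : R)
    (p : nat -> V -> V -> R) (f b : nat -> V -> R) : Prop :=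
  [/\ forall t v, v != s ->
        f t.+1 v = (1 - l v) * \sum_(z | E z v) fwd_edge_flow (p t) (f t) z v,
      forall t u, u != d ->
        b t.+1 u = (1 - l u) * \sum_(z | E u z) bwd_edge_flow (p t) (b t) u z
    & forall t u v, E u v ->
        p t.+1 u v = delta * (p t u v + fwd_edge_flow (p t) (f t) u v
                                      + bwd_edge_flow (p t) (b t) u v)].

Definition path_edge (q : seq V) (x y : V) : bool := (x, y) \in zip q (behead q).

Definition two_parallel_paths (s d : V) (p1 p2 : seq V) : Prop :=
  [/\ s != d,
      [/\ head d p1 = s, last s p1 = d & uniq p1],
      [/\ head d p2 = s, last s p2 = d & uniq p2],
      (forall x, x \in p1 -> x \in p2 -> x = s \/ x = d)
    & (forall v, v \in p1 \/ v \in p2)] /\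
  (forall x y, E x y = path_edge p1 x y || path_edge p2 x y).

Definition r_ratio (p : nat -> V -> V -> R) (a x y : V) (t : nat) : R :=
  p t a x / p t a y.
Definition r_ratio_d (p : nat -> V -> V -> R) (x y c : V) (t : nat) : R :=
  p t x c / p t y c.

(* r_min(t) = min { r_{ss1}(t-i), r_{d1d}(t-i) : 0 <= i <= L-1 } (used for t >= L). *)
Definition r_min (p : nat -> V -> V -> R) (s d s1 s2 d1 d2 : V) (L t : nat) : R :=
  \big[Num.min/r_ratio p s s1 s2 t]_(i < L)
     Num.min (r_ratio p s s1 s2 (t - i)) (r_ratio_d p d1 d2 d (t - i)).

Definition T1_pos (p0 : V -> V -> R) (fs0 bd0 delta : R) : R :=
  \big[Num.max/0]_(e : V * V | E e.1 e.2) (ln (p0 e.1 e.2 / (fs0 + bd0)) / ln delta^-1).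

End Model.

(* Main.v *)
Require Import Defs.
From HB Require Import structures.
From mathcomp Require Import all_boot all_order all_algebra.
From mathcomp Require Import reals exp.
From mathcomp Require Import zify ring lra.
Set Implicit Arguments. Unset Strict Implicit. Unset Printing Implicit Defensive.
Import Order.TTheory GRing.Theory Num.Theory.
Local Open Scope ring_scope.

Section Struct.
Variables (V : finType) (s : V).

Lemma path_edgeP (q : seq V) x y :
  path_edge q x y <->
  exists i, [/\ (i.+1 < size q)%N, x = nth s q i & y = nth s q i.+1].
Proof.
rewrite /path_edge; split.
  move/(nthP (s, s)) => [i Hi]; rewrite nth_zip_cond Hi => -[<- <-].
  exists i; rewrite size_zip size_behead in Hi; split => //.
    by move: Hi; case: (size q) => // k; rewrite minnE; lia.
  by rewrite nth_behead.
move=> [i [Hi -> ->]]; apply/(nthP (s, s)); exists i.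
  rewrite size_zip size_behead; move: Hi; case: (size q) => // k; lia.
rewrite nth_zip_cond size_zip size_behead.
have -> : (i < minn (size q) (size q).-1)%N.
  move: Hi; case: (size q) => // k; lia.
by rewrite nth_behead.
Qed.

End Struct.


Section Single.
Variables (V : finType) (s d : V) (q : seq V).
Hypotheses (sd : s != d) (hh : head d q = s) (hl : last s q = d) (hu : uniq q).

Lemma sp_size : (1 < size q)%N.
Proof.
case: q hh hl hu => [|x [|y r]] //=; first by move=> E; move: sd; rewrite E eqxx.
by move=> -> E; move: sd; rewrite E eqxx.
Qed.

Local Notation N := (size q).-1.
Ltac slia := let hsz := fresh "hsz" in have hsz := sp_size; lia.

Lemma sp_0 : nth s q 0 = s.
Proof. by case: q hh hl sp_size => [|x r] //= ->. Qed.

Lemma sp_N : nth s q N = d.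
Proof. by rewrite nth_last. Qed.

Lemma sp_lt i : (i <= N)%N -> (i < size q)%N.
Proof. move=> hxx; slia. Qed.

Lemma sp_le i : (i < size q)%N -> (i <= N)%N.
Proof. move=> hxx; slia. Qed.

Lemma sp_inj i j : (i <= N)%N -> (j <= N)%N -> nth s q i = nth s q j -> i = j.
Proof.
move=> hi hj e; apply/eqP; rewrite -(nth_uniq s _ _ hu); first by rewrite e.
  exact: sp_lt.
exact: sp_lt.
Qed.

Lemma sp_mem i : (i <= N)%N -> nth s q i \in q.
Proof. by move=> hi; apply: mem_nth; apply: sp_lt. Qed.

Lemma sp_mem_idx x : x \in q -> exists2 i, (i <= N)%N & x = nth s q i.
Proof.
move/(nthP s) => [i hi <-]; exists i => //; exact: sp_le.
Qed.

Lemma pe_mem x y : path_edge q x y -> x \in q /\ y \in q.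
Proof.
move/(path_edgeP s) => [i [hi -> ->]]; split; apply: mem_nth; [apply: ltnW|]; exact hi.
Qed.

Lemma pe_src z : path_edge q s z = (z == nth s q 1).
Proof.
apply/idP/eqP.
  move/(path_edgeP s) => [i [hi e ->]].
  have i0 : i = 0%N by apply: sp_inj; [slia| slia | by rewrite sp_0].
  by rewrite i0.
move=> ->; apply/(path_edgeP s); exists 0%N; split => //; first exact: sp_size.
by rewrite sp_0.
Qed.

Lemma pe_dst z : path_edge q z d = (z == nth s q N.-1).
Proof.
have hs := sp_size.
apply/idP/eqP.
  move/(path_edgeP s) => [i [hi -> e]].
  have iN : i.+1 = N by apply: sp_inj; [slia| slia | by rewrite sp_N].
  by rewrite -iN.
move=> ->; apply/(path_edgeP s); exists N.-1; split => //; first slia.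
by rewrite -sp_N; congr nth; slia.
Qed.

Lemma pe_in j z : (0 < j < N)%N ->
  path_edge q z (nth s q j) = (z == nth s q j.-1).
Proof.
have hs := sp_size => hj.
apply/idP/eqP.
  move/(path_edgeP s) => [i [hi -> e]].
  have iN : i.+1 = j by apply: sp_inj; [slia|slia|by []].
  by rewrite -iN.
move=> ->; apply/(path_edgeP s); exists j.-1; split => //; first slia.
by congr nth; slia.
Qed.

Lemma pe_out j z : (0 < j < N)%N ->
  path_edge q (nth s q j) z = (z == nth s q j.+1).
Proof.
have hs := sp_size => hj.
apply/idP/eqP.
  move/(path_edgeP s) => [i [hi e ->]].
  have iN : i = j by apply: sp_inj; [slia|slia|by []].
  by rewrite iN.
move=> ->; apply/(path_edgeP s); exists j; split => //; slia.
Qed.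

Lemma pe_edge j : (j < N)%N -> path_edge q (nth s q j) (nth s q j.+1).
Proof. move=> hj; apply/(path_edgeP s); exists j; split => //; slia. Qed.

Lemma sp_internal j : (0 < j < N)%N -> nth s q j != s /\ nth s q j != d.
Proof.
move=> hj; split; apply/eqP => e.
  have := @sp_inj j 0 ltac:(slia) ltac:(slia); rewrite e sp_0 => /(_ erefl); slia.
have := @sp_inj j N ltac:(slia) ltac:(slia); rewrite e sp_N => /(_ erefl); slia.
Qed.

End Single.


Section Graph.
#[local] Set Default Proof Using "All".
Variables (V : finType) (E : rel V) (s d : V) (q q' : seq V).
Hypotheses (sd : s != d) (hh : head d q = s) (hl : last s q = d) (hu : uniq q)
  (hh' : head d q' = s) (hl' : last s q' = d) (hu' : uniq q')
  (hsh : forall x, x \in q -> x \in q' -> x = s \/ x = d)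
  (hE : forall x y, E x y = path_edge q x y || path_edge q' x y).

Local Notation N := (size q).-1.
Local Notation N' := (size q').-1.
Local Notation a j := (nth s q j).
Local Notation c j := (nth s q' j).

Lemma int_notin j : (0 < j < N)%N -> a j \notin q'.
Proof.
move=> hj; apply/negP => hin.
have [h1 h2] := sp_internal sd hh hl hu hj.
have hm : a j \in q by apply: (sp_mem sd hh hl hu); lia.
case: (hsh hm hin) => e.
  by move: h1; rewrite e eqxx.
by move: h2; rewrite e eqxx.
Qed.

Lemma g_in j z : (0 < j < N)%N -> E z (a j) = (z == a j.-1).
Proof.
move=> hj; rewrite hE (pe_in sd hh hl hu z hj).
case: (boolP (path_edge q' z (a j))) => [/(pe_mem s) [_ hin]|]; last by rewrite orbF.
by move: (int_notin hj); rewrite hin.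
Qed.

Lemma g_out j z : (0 < j < N)%N -> E (a j) z = (z == a j.+1).
Proof.
move=> hj; rewrite hE (pe_out sd hh hl hu z hj).
case: (boolP (path_edge q' (a j) z)) => [/(pe_mem s) [hin _]|]; last by rewrite orbF.
by move: (int_notin hj); rewrite hin.
Qed.

Lemma g_src z : E s z = (z == a 1) || (z == c 1).
Proof. by rewrite hE (pe_src sd hh hl hu) (pe_src sd hh' hl' hu'). Qed.

Lemma g_dst z : E z d = (z == a N.-1) || (z == c N'.-1).
Proof. by rewrite hE (pe_dst sd hh hl hu) (pe_dst sd hh' hl' hu'). Qed.

Lemma g_edge j : (j < N)%N -> E (a j) (a j.+1).
Proof. by move=> hj; rewrite hE (pe_edge sd hh hl hu hj). Qed.

Lemma src_distinct : (1 < N)%N \/ (1 < N')%N -> a 1 != c 1.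
Proof.
have hs := sp_size sd hh hl hu; have hs' := sp_size sd hh' hl' hu'.
move=> hN; apply/eqP => e.
have m1 : a 1 \in q by apply: (sp_mem sd hh hl hu); lia.
have m2 : a 1 \in q' by rewrite e; apply: (sp_mem sd hh' hl' hu'); lia.
case: (hsh m1 m2) => e2.
  have := @sp_inj _ s d q sd hh hl hu 1 0 ltac:(lia) ltac:(lia).
  by rewrite e2 (sp_0 sd hh hl hu) => /(_ erefl).
have := @sp_inj _ s d q sd hh hl hu 1 N ltac:(lia) ltac:(lia).
rewrite e2 (sp_N hl) => /(_ erefl) h1.
have := @sp_inj _ s d q' sd hh' hl' hu' 1 N' ltac:(lia) ltac:(lia).
rewrite -e e2 (sp_N hl') => /(_ erefl) h2.
lia.
Qed.

Lemma dst_distinct : (1 < N)%N \/ (1 < N')%N -> a N.-1 != c N'.-1.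
Proof.
have hs := sp_size sd hh hl hu; have hs' := sp_size sd hh' hl' hu'.
move=> hN; apply/eqP => e.
have m1 : a N.-1 \in q by apply: (sp_mem sd hh hl hu); lia.
have m2 : a N.-1 \in q' by rewrite e; apply: (sp_mem sd hh' hl' hu'); lia.
case: (hsh m1 m2) => e2.
  have := @sp_inj _ s d q sd hh hl hu N.-1 0 ltac:(lia) ltac:(lia).
  rewrite e2 (sp_0 sd hh hl hu) => /(_ erefl) h1.
  have := @sp_inj _ s d q' sd hh' hl' hu' N'.-1 0 ltac:(lia) ltac:(lia).
  rewrite -e e2 (sp_0 sd hh' hl' hu') => /(_ erefl) h2.
  lia.
have := @sp_inj _ s d q sd hh hl hu N.-1 N ltac:(lia) ltac:(lia).
rewrite e2 (sp_N hl) => /(_ erefl) h1.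
lia.
Qed.

Variable (R : realType).

Lemma fwd_int (P : V -> V -> R) (F : V -> R) j y : (0 < j < N)%N ->
  fwd_edge_flow E P F (a j) y = F (a j).
Proof.
move=> hj; rewrite /fwd_edge_flow.
have -> : #|[pred z | E (a j) z]| = 1%N.
  by rewrite -(card1 (a j.+1)); apply: eq_card => z; rewrite inE g_out.
by [].
Qed.

Lemma bwd_int (P : V -> V -> R) (B : V -> R) j x : (0 < j < N)%N ->
  bwd_edge_flow E P B x (a j) = B (a j).
Proof.
move=> hj; rewrite /bwd_edge_flow.
have -> : #|[pred z | E z (a j)]| = 1%N.
  by rewrite -(card1 (a j.-1)); apply: eq_card => z; rewrite inE g_in.
by [].
Qed.

Lemma sum_in (G : V -> R) j : (0 < j < N)%N ->
  \sum_(z | E z (a j)) G z = G (a j.-1).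
Proof. by move=> hj; apply: big_pred1 => z; rewrite /= g_in. Qed.

Lemma sum_out (G : V -> R) j : (0 < j < N)%N ->
  \sum_(z | E (a j) z) G z = G (a j.+1).
Proof. by move=> hj; apply: big_pred1 => z; rewrite /= g_out. Qed.

Lemma sum_pair (G : V -> R) (P : pred V) x y : x != y ->
  P =1 [pred z | (z == x) || (z == y)] ->
  \sum_(z | P z) G z = G x + G y.
Proof.
move=> xy hP; rewrite (bigD1 x) /=; last by rewrite hP /= eqxx.
congr (_ + _); apply: big_pred1 => z /=; rewrite hP /=.
case: (eqVneq z x) => [->|] /=; first by rewrite (negbTE xy).
by rewrite andbT.
Qed.

Lemma card_pair (P : pred V) x y : x != y ->
  P =1 [pred z | (z == x) || (z == y)] -> #|[pred z | P z]| = 2%N.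
Proof.
move=> xy hP; have -> : 2%N = (x != y).+1 by rewrite xy.
by rewrite -card2; apply: eq_card => z; rewrite !inE hP.
Qed.

Hypothesis hNN : (1 < N)%N \/ (1 < N')%N.

Lemma fwd_src (P : V -> V -> R) (F : V -> R) y :
  fwd_edge_flow E P F s y = F s * P s y / (P s (a 1) + P s (c 1)).
Proof.
rewrite /fwd_edge_flow (card_pair (src_distinct hNN) g_src) /out_sum.
by rewrite (sum_pair _ (src_distinct hNN) g_src).
Qed.

Lemma bwd_dst (P : V -> V -> R) (B : V -> R) x :
  bwd_edge_flow E P B x d = B d * P x d / (P (a N.-1) d + P (c N'.-1) d).
Proof.
rewrite /bwd_edge_flow (card_pair (dst_distinct hNN) (P := fun z => E z d) g_dst).
by rewrite /in_sum (sum_pair (fun z => P z d) (dst_distinct hNN) g_dst).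
Qed.

End Graph.


Section PathDyn.
#[local] Set Default Proof Using "All".
Variables (R : realType) (V : finType) (E : rel V) (s d : V) (q q' : seq V)
  (l : V -> R) (delta : R) (p : nat -> V -> V -> R) (f b : nat -> V -> R).
Hypotheses (sd : s != d) (hh : head d q = s) (hl : last s q = d) (hu : uniq q)
  (hh' : head d q' = s) (hl' : last s q' = d) (hu' : uniq q')
  (hsh : forall x, x \in q -> x \in q' -> x = s \/ x = d)
  (hE : forall x y, E x y = path_edge q x y || path_edge q' x y).
Local Notation N := (size q).-1.
Local Notation N' := (size q').-1.
Local Notation a j := (nth s q j).
Local Notation c j := (nth s q' j).
Hypothesis (hNN : (1 < N)%N \/ (1 < N')%N).
Hypotheses (htr : is_trajectory E s d l delta p f b) (hl0 : forall v, l v = 0).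

Local Notation FA j k := (fwd_edge_flow E (p k) (f k) (a j) (a j.+1)).
Local Notation BA j k := (bwd_edge_flow E (p k) (b k) (a j) (a j.+1)).

Lemma hsz : (1 < size q)%N. Proof. exact: sp_size sd hh hl hu. Qed.

Lemma p_upd j k : (j < N)%N ->
  p k.+1 (a j) (a j.+1) = delta * (p k (a j) (a j.+1) + FA j k + BA j k).
Proof.
move=> hj; case: htr => _ _ -> //.
exact: (g_edge sd hh hl hu hh' hl' hu' hsh hE).
Qed.

Lemma FA_int j k : (0 < j < N)%N -> FA j k = f k (a j).
Proof. by move=> hj; rewrite (fwd_int sd hh hl hu hh' hl' hu' hsh hE). Qed.

Lemma BA_int j k : (j.+1 < N)%N -> BA j k = b k (a j.+1).
Proof.
move=> hj; rewrite (bwd_int sd hh hl hu hh' hl' hu' hsh hE) //; lia.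
Qed.

Lemma f_upd j k : (0 < j < N)%N -> f k.+1 (a j) = FA j.-1 k.
Proof.
move=> hj; have [h1 _] := sp_internal sd hh hl hu hj.
case: htr => -> // _ _; rewrite hl0 subr0 mul1r.
rewrite (sum_in sd hh hl hu hh' hl' hu' hsh hE) // prednK //; lia.
Qed.

Lemma b_upd j k : (0 < j < N)%N -> b k.+1 (a j) = BA j k.
Proof.
move=> hj; have [_ h2] := sp_internal sd hh hl hu hj.
case: htr => _ -> // _; rewrite hl0 subr0 mul1r.
by rewrite (sum_out sd hh hl hu hh' hl' hu' hsh hE (fun z => bwd_edge_flow E (p k) (b k) (a j) z)).
Qed.

Lemma FA_src k :
  FA 0 k = f k s * p k s (a 1) / (p k s (a 1) + p k s (c 1)).
Proof.
by rewrite (sp_0 sd hh hl hu) (fwd_src sd hh hl hu hh' hl' hu' hsh hE hNN).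
Qed.

Lemma aN : a N = d. Proof. exact: sp_N hl. Qed.

Lemma BA_dst k :
  BA N.-1 k = b k d * p k (a N.-1) d / (p k (a N.-1) d + p k (c N'.-1) d).
Proof.
have hs := hsz.
have -> : (N.-1.+1 = N)%N by lia.
by rewrite aN (bwd_dst sd hh hl hu hh' hl' hu' hsh hE hNN).
Qed.

Lemma FA_shift j k : (j < N)%N -> (j <= k)%N -> FA j k = FA 0 (k - j).
Proof.
elim: j k => [|j IH] k hj hk; first by rewrite subn0.
case: k hk => [|k] hk; first lia.
rewrite FA_int; last lia.
rewrite f_upd; last lia.
rewrite /= IH; [by [] | lia | lia].
Qed.

Lemma BA_shift i k : (i < N)%N -> (i <= k)%N -> BA (N.-1 - i) k = BA N.-1 (k - i).
Proof.
elim: i k => [|i IH] k hi hk; first by rewrite !subn0.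
case: k hk => [|k] hk; first lia.
rewrite BA_int; last lia.
have -> : ((N.-1 - i.+1).+1 = N.-1 - i)%N by lia.
rewrite b_upd; last lia.
rewrite IH; [by [] | lia | lia].
Qed.




Lemma share_bnd (F A x y : R) : 0 <= F <= A -> 0 < x -> 0 < y ->
  0 <= F * x / (x + y) <= A.
Proof.
move=> /andP[F0 FA] x0 y0; have xy0 : 0 < x + y by rewrite addr_gt0.
apply/andP; split.
  apply: mulr_ge0; [apply: mulr_ge0|rewrite invr_ge0]; lra.
rewrite ler_pdivrMr //; apply: (le_trans (y := A * x)); first by rewrite ler_pM2r.
have A0 : 0 <= A by apply: le_trans FA.
rewrite ler_wpM2l //; lra.
Qed.

Lemma edge_bounds k (A B : R) :
  (forall j, (j < N)%N -> 0 < p k (a j) (a j.+1)) ->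
  0 < p k s (c 1) -> 0 < p k (c N'.-1) d ->
  (forall j, (0 < j < N)%N -> 0 <= f k (a j) <= A /\ 0 <= b k (a j) <= B) ->
  0 <= f k s <= A -> 0 <= b k d <= B ->
  forall j, (j < N)%N -> 0 <= FA j k <= A /\ 0 <= BA j k <= B.
Proof.
move=> hp hc1 hcN hn hfs hbd j hj; have hs := hsz; split.
  case: j hj => [|j] hj.
    rewrite FA_src; apply: share_bnd => //.
    by have := hp 0%N ltac:(lia); rewrite (sp_0 sd hh hl hu).
  by rewrite FA_int; [case: (hn j.+1 ltac:(lia)) | lia].
case: (ltnP j.+1 N) => hjN.
  by rewrite BA_int //; case: (hn j.+1 ltac:(lia)).
have -> : j = N.-1 by lia.
rewrite BA_dst; apply: share_bnd => //.
have := hp N.-1 ltac:(lia).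
have e : (N.-1.+1 = N)%N by lia.
by rewrite e aN.
Qed.

End PathDyn.


Lemma T1_edge (R : realType) (V : finType) (E : rel V) (p0 : V -> V -> R)
  (fs0 bd0 delta : R) (k : nat) u v :
  0 < delta -> delta < 1 -> 0 < fs0 + bd0 -> 0 < p0 u v -> E u v ->
  T1_pos E p0 fs0 bd0 delta <= k%:R -> delta ^+ k * p0 u v <= fs0 + bd0.
Proof.
move=> d0 d1 c0 p00 Euv hT.
have di : 1 < delta^-1 by rewrite invf_gt1.
have g0 : 0 < ln delta^-1 := ln_gt0 di.
have h1 : ln (p0 u v / (fs0 + bd0)) / ln delta^-1 <= k%:R.
  apply: le_trans hT; rewrite /T1_pos.
  exact: (le_bigmax_cond _ (j := (u, v)) (P := fun e => E e.1 e.2)).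
have dk : 0 < delta ^+ k by rewrite exprn_gt0.
rewrite ler_pdivrMr // mulr_natl -lnXn in h1; last by rewrite (lt_trans ltr01).
rewrite ler_ln ?posrE in h1; last first.
- by rewrite exprn_gt0 // (lt_trans ltr01).
- by rewrite divr_gt0.
rewrite exprVn ler_pdivrMr // in h1.
rewrite mulrC -ler_pdivlMr //; by rewrite mulrC.
Qed.

Lemma rec_bound (R : realType) (X : nat -> R) (delta lambda C : R) :
  0 < delta -> delta < 1 -> 1 <= lambda -> 0 <= C ->
  (forall k, X k.+1 <= delta * (X k + C * lambda ^+ k)) ->
  forall k, X k <= delta ^+ k * X 0%N + C * lambda ^+ k * (delta / (1 - delta)).
Proof.
move=> d0 d1 l1 C0 hX; set w := delta / (1 - delta).
have w0 : 0 <= w by rewrite /w divr_ge0 // ?subr_ge0 ltW.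
have dw : delta * (w + 1) = w.
  rewrite /w; field; apply/eqP => e; move: d1; rewrite -subr_gt0 e ltxx //.
elim=> [|k IH]; first by rewrite expr0 mul1r expr0 mulr1 lerDl mulr_ge0.
have lk : 0 <= lambda ^+ k by rewrite exprn_ge0 // (le_trans ler01).
apply: le_trans (hX k) _.
have : delta * (X k + C * lambda ^+ k) <=
    delta * (delta ^+ k * X 0%N + C * lambda ^+ k * w + C * lambda ^+ k).
  apply: ler_wpM2l; [exact: ltW|]; lra.
move/le_trans; apply.
have -> : delta * (delta ^+ k * X 0%N + C * lambda ^+ k * w + C * lambda ^+ k)
   = delta ^+ k.+1 * X 0%N + C * lambda ^+ k * (delta * (w + 1)).
  by rewrite exprS; ring.
rewrite dw lerD2l exprS; set u := C * lambda ^+ k.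
have u0 : 0 <= u by rewrite mulr_ge0.
have uw : 0 <= u * w by rewrite mulr_ge0.
have -> : C * (lambda * lambda ^+ k) * w = lambda * (u * w) by rewrite /u; ring.
by rewrite ler_peMl.
Qed.

Lemma key_ineq (R : realType) (rho g lam P1 P2 fs Q1 Q2 R1 R2 bA bC : R) :
  0 < rho -> 0 <= g -> 1 < lam -> 0 < P1 -> 0 < P2 -> 0 <= fs ->
  0 < Q1 -> 0 < Q2 -> 0 < R1 -> 0 < R2 -> 0 <= bC -> lam * bC <= bA ->
  rho * P2 <= P1 -> rho * Q2 <= Q1 -> rho * R2 <= R1 ->
  g * (lam * (P1 + P2 + fs) + bA) <= (lam - 1) * bA ->
  rho * (1 + g) <= (P1 + fs * P1 / (P1 + P2) + bA * Q1 / (Q1 + Q2)) /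
                   (P2 + fs * P2 / (P1 + P2) + bC * R2 / (R1 + R2)).
Proof.
move=> r0 g0 l1 P10 P20 fs0 Q10 Q20 R10 R20 bC0 hb hP hQ hR hg.
have P0 : 0 < P1 + P2 by rewrite addr_gt0.
have Q0 : 0 < Q1 + Q2 by rewrite addr_gt0.
have R0 : 0 < R1 + R2 by rewrite addr_gt0.
have r1 : 0 < 1 + rho by rewrite addr_gt0.
set z := (1 + rho)^-1.
have z0 : 0 < z by rewrite invr_gt0.
set h := 1 + fs / (P1 + P2).
have h0 : 0 <= h by rewrite addr_ge0 // divr_ge0 // ltW.
have e1 : P1 + fs * P1 / (P1 + P2) = P1 * h.
  rewrite /h; field; exact: lt0r_neq0.
have e2 : P2 + fs * P2 / (P1 + P2) = P2 * h.
  rewrite /h; field; exact: lt0r_neq0.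
set x1 := Q1 / (Q1 + Q2).
set x2 := R2 / (R1 + R2).
have hx1 : rho * z <= x1.
  rewrite /x1 /z ler_pdivlMr // mulrAC ler_pdivrMr //; nra.
have hx2 : x2 <= z.
  rewrite /x2 /z ler_pdivrMr // mulrC ler_pdivlMr //; nra.
have hx20 : 0 <= x2 by rewrite /x2 divr_ge0 // ltW.
set S := P1 + P2 + fs.
have hH : P2 * h <= S * z.
  have -> : P2 * h = S * (P2 / (P1 + P2)).
    rewrite /S /h; field; exact: lt0r_neq0.
  have S0 : 0 <= S by rewrite /S; lra.
  apply: ler_wpM2l => //; rewrite /z ler_pdivrMr // mulrC ler_pdivlMr //; nra.
have hH0 : 0 <= P2 * h by rewrite mulr_ge0 // ltW.
have hP1 : rho * (P2 * h) <= P1 * h by rewrite mulrA ler_wpM2r.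
have bA0 : 0 <= bA by apply: le_trans hb; rewrite mulr_ge0 // ltW // (lt_trans ltr01).
have hcore : g * S + (1 + g) * bC <= bA.
  have l0 : 0 < lam by apply: lt_trans l1.
  rewrite -(ler_pM2l l0).
  have g1 : 0 <= 1 + g by lra.
  have := ler_wpM2l g1 hb; rewrite /S in hg *; nra.
rewrite e1 e2.
have -> : bA * Q1 / (Q1 + Q2) = bA * x1 by rewrite /x1 mulrA.
have -> : bC * R2 / (R1 + R2) = bC * x2 by rewrite /x2 mulrA.
have D0 : 0 < P2 * h + bC * x2.
  apply: lt_le_trans (_ : 0 < P2 * h) _.
    by rewrite mulr_gt0 // (lt_le_trans ltr01) // lerDl divr_ge0 // ltW.
  by rewrite lerDl mulr_ge0.
rewrite ler_pdivlMr //.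
have s1 : rho * (P2 * h) + bA * (rho * z) <= P1 * h + bA * x1.
  apply: lerD => //; exact: ler_wpM2l.
apply: le_trans _ s1.
have s2 : g * (P2 * h) <= g * (S * z) by exact: ler_wpM2l.
have s3 : (1 + g) * (bC * x2) <= (1 + g) * (bC * z).
  by apply: ler_wpM2l; [lra | exact: ler_wpM2l].
have s4 : z * (g * S + (1 + g) * bC) <= z * bA by apply: ler_wpM2l => //; exact: ltW.
have : g * (P2 * h) + (1 + g) * (bC * x2) <= bA * z by nra.
move=> s5.
have : rho * (g * (P2 * h) + (1 + g) * (bC * x2)) <= rho * (bA * z).
  by apply: ler_wpM2l => //; exact: ltW.
move=> s6; nra.
Qed.

Lemma cond_ineq (R : realType) (delta lam cc M b0 S Lm mu g : R) :
  0 < delta -> delta < 1 -> 1 < lam -> 0 < cc -> 0 <= M -> M <= b0 -> b0 <= cc ->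
  1 <= mu -> 0 < Lm -> lam * S * (1 - delta) <= 3%:R * cc * Lm * mu ->
  g = M * (1 - delta) * (lam - 1) / (6%:R * cc * mu) ->
  g * (lam * S + Lm * b0) <= (lam - 1) * (Lm * b0).
Proof.
move=> d0 d1 l1 c0 M0 Mb bc mu1 L0 hS ->.
have mu0 : 0 < mu by apply: lt_le_trans mu1.
have c6 : 0 < 6%:R * cc * mu by rewrite !mulr_gt0.
set K := M * (lam - 1) / (6%:R * cc * mu).
have K0 : 0 <= K.
  rewrite /K; apply: divr_ge0; last exact: ltW.
  by apply: mulr_ge0 => //; rewrite subr_ge0 ltW.
have eg : M * (1 - delta) * (lam - 1) / (6%:R * cc * mu) = K * (1 - delta).
  by rewrite /K; field; rewrite ?(lt0r_neq0 mu0) ?(lt0r_neq0 c0).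
rewrite eg.
have t1 : K * (1 - delta) * (lam * S) <= K * (3%:R * cc * Lm * mu).
  have -> : K * (1 - delta) * (lam * S) = K * (lam * S * (1 - delta)) by ring.
  exact: ler_wpM2l.
have e1 : K * (3%:R * cc * Lm * mu) = M * (lam - 1) * Lm / 2%:R.
  by rewrite /K; field; rewrite ?(lt0r_neq0 mu0) ?(lt0r_neq0 c0).
have t2 : K * (1 - delta) * (Lm * b0) <= K * (cc * mu) * Lm.
  have : (1 - delta) * b0 <= cc * mu.
    apply: le_trans (_ : cc <= cc * mu); last by rewrite ler_peMr // ltW.
    have b00 : 0 <= b0 by apply: le_trans Mb.
    apply: le_trans bc; rewrite ler_piMl //; lra.
  move=> h; have := ler_wpM2l K0 h => h2.
  have := ler_wpM2r (ltW L0) h2; apply: le_trans; rewrite le_eqVlt; apply/orP; left.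
  by apply/eqP; ring.
have e2 : K * (cc * mu) * Lm = M * (lam - 1) * Lm / 6%:R.
  by rewrite /K; field; rewrite ?(lt0r_neq0 mu0) ?(lt0r_neq0 c0).
rewrite mulrDr; rewrite e1 in t1; rewrite e2 in t2.
have hM : M * (lam - 1) * Lm <= b0 * (lam - 1) * Lm.
  apply: ler_wpM2r; first exact: ltW.
  by apply: ler_wpM2r => //; rewrite subr_ge0 ltW.
have hM0 : 0 <= M * (lam - 1) * Lm.
  apply: mulr_ge0; last exact: ltW.
  by apply: mulr_ge0 => //; rewrite subr_ge0 ltW.
have -> : (lam - 1) * (Lm * b0) = b0 * (lam - 1) * Lm by ring.
move: t1 t2 hM hM0; set X := M * (lam - 1) * Lm; set Y := b0 * (lam - 1) * Lm.
move=> t1 t2 hM hM0; lra.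
Qed.

Lemma bigmin_seq_le (R : realType) (I : eqType) (r : seq I) (F : I -> R) x i :
  i \in r -> \big[Num.min/x]_(j <- r) F j <= F i.
Proof.
elim: r => [|a r IH] //=; rewrite inE big_cons => /orP[/eqP ->|hi].
  by rewrite ge_min lexx.
by rewrite ge_min IH ?orbT.
Qed.

Lemma bigmin_seq_ge (R : realType) (I : eqType) (r : seq I) (F : I -> R) x y :
  y <= x -> (forall i, i \in r -> y <= F i) -> y <= \big[Num.min/x]_(j <- r) F j.
Proof.
move=> yx; elim: r => [|a r IH] h; first by rewrite big_nil.
rewrite big_cons le_min h ?mem_head // IH // => i hi.
by apply: h; rewrite inE hi orbT.
Qed.

Lemma bigmin_ord_le (R : realType) (L : nat) (F : 'I_L -> R) x i :
  \big[Num.min/x]_(j < L) F j <= F i.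
Proof. by apply: bigmin_seq_le; rewrite mem_index_enum. Qed.

Lemma bigmin_ord_ge (R : realType) (L : nat) (F : 'I_L -> R) x y :
  y <= x -> (forall i, y <= F i) -> y <= \big[Num.min/x]_(j < L) F j.
Proof. by move=> yx h; apply: bigmin_seq_ge. Qed.


Section Main.
#[local] Set Default Proof Using "All".
Variables (R : realType) (V : finType) (E : rel V) (s d : V) (p1 p2 : seq V)
  (l : V -> R) (delta lambda : R)
  (p : nat -> V -> V -> R) (f b : nat -> V -> R).
Hypotheses (sd : s != d) (hh1 : head d p1 = s) (hl1 : last s p1 = d) (hu1 : uniq p1)
  (hh2 : head d p2 = s) (hl2 : last s p2 = d) (hu2 : uniq p2)
  (hsh : forall x, x \in p1 -> x \in p2 -> x = s \/ x = d)
  (hE : forall x y, E x y = path_edge p1 x y || path_edge p2 x y).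
Local Notation m := (size p1).-1.
Local Notation n := (size p2).-1.
Local Notation a j := (nth s p1 j).
Local Notation c j := (nth s p2 j).
Hypotheses (hmn : (m < n)%N) (hd0 : 0 < delta) (hd1 : delta < 1)
  (htr : is_trajectory E s d l delta p f b) (hl0 : forall v, l v = 0)
  (hp0 : forall u v, E u v -> 0 < p 0%N u v) (hlam : 1 < lambda)
  (hfs0 : 0 < f 0%N s) (hbd0 : 0 < b 0%N d)
  (hfs : forall t, f t s = lambda ^+ t * f 0%N s)
  (hbd : forall t, b t d = lambda ^+ t * b 0%N d)
  (hf0 : forall v, v != s -> v != d -> 0 <= f 0%N v <= f 0%N s)
  (hb0 : forall v, v != s -> v != d -> 0 <= b 0%N v <= b 0%N d).

Lemma hsh' x : x \in p2 -> x \in p1 -> x = s \/ x = d.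
Proof. by move=> h2 h1; apply: hsh. Qed.
Lemma hE' x y : E x y = path_edge p2 x y || path_edge p1 x y.
Proof. by rewrite hE orbC. Qed.
Lemma hm1 : (1 < size p1)%N. Proof. exact: sp_size sd hh1 hl1 hu1. Qed.
Lemma hn1 : (1 < size p2)%N. Proof. exact: sp_size sd hh2 hl2 hu2. Qed.
Ltac nlia := have := hm1; have := hn1;
  repeat match goal with
    | H : is_true (leq _ _) |- _ => revert H
    | H : is_true (leq _ _ && _) |- _ => revert H
    | H : (_ = _ :> nat) |- _ => revert H end;
  repeat match goal with H : _ |- _ => clear H end; intros; lia.

Lemma hNN : (1 < m)%N \/ (1 < n)%N. Proof. have := hm1; right; nlia. Qed.
Lemma hNN' : (1 < n)%N \/ (1 < m)%N. Proof. have := hm1; left; nlia. Qed.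

Local Notation L1 lem := (lem _ _ _ _ _ _ _ _ _ _ _ _ sd hh1 hl1 hu1 hh2 hl2 hu2 hsh hE hNN htr hl0) (only parsing).
Local Notation L2 lem := (lem _ _ _ _ _ _ _ _ _ _ _ _ sd hh2 hl2 hu2 hh1 hl1 hu1 hsh' hE' hNN' htr hl0) (only parsing).


Definition Sk (k : nat) :=
  [/\ forall j, (j < m)%N -> 0 < p k (a j) (a j.+1),
      forall j, (j < n)%N -> 0 < p k (c j) (c j.+1),
      forall j, (0 < j < m)%N -> 0 <= f k (a j) <= lambda ^+ k * f 0%N s /\
                                 0 <= b k (a j) <= lambda ^+ k * b 0%N d
    & forall j, (0 < j < n)%N -> 0 <= f k (c j) <= lambda ^+ k * f 0%N s /\
                                 0 <= b k (c j) <= lambda ^+ k * b 0%N d].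

Lemma lamk_gt0 k : 0 < lambda ^+ k.
Proof. by rewrite exprn_gt0 // (lt_trans ltr01). Qed.

Lemma lamk_le k (x : R) : 0 <= x -> lambda ^+ k * x <= lambda ^+ k.+1 * x.
Proof.
move=> x0; rewrite exprS -mulrA ler_peMl //.
  by rewrite mulr_ge0 // ltW // lamk_gt0.
exact: ltW.
Qed.

Lemma fs_bnd k : 0 <= f k s <= lambda ^+ k * f 0%N s.
Proof. by rewrite hfs lexx andbT mulr_ge0 // ltW // lamk_gt0. Qed.
Lemma bd_bnd k : 0 <= b k d <= lambda ^+ k * b 0%N d.
Proof. by rewrite hbd lexx andbT mulr_ge0 // ltW // lamk_gt0. Qed.

Lemma bounds k : Sk k.
Proof.
have hm := hm1; have hn := hn1.
elim: k => [|k [Ha Hc Na Nc]].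
  split.
  - move=> j hj; apply: hp0; exact: (g_edge sd hh1 hl1 hu1 hh2 hl2 hu2 hsh hE).
  - move=> j hj; apply: hp0; exact: (g_edge sd hh2 hl2 hu2 hh1 hl1 hu1 hsh' hE').
  - move=> j hj; have [h1 h2] := sp_internal sd hh1 hl1 hu1 hj.
    by rewrite expr0 !mul1r; split; [apply: hf0 | apply: hb0].
  - move=> j hj; have [h1 h2] := sp_internal sd hh2 hl2 hu2 hj.
    by rewrite expr0 !mul1r; split; [apply: hf0 | apply: hb0].
have Ec1 : 0 < p k s (c 1).
  by have := Hc 0%N ltac:(nlia); rewrite (sp_0 sd hh2 hl2 hu2).
have Ea1 : 0 < p k s (a 1).
  by have := Ha 0%N ltac:(nlia); rewrite (sp_0 sd hh1 hl1 hu1).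
have EcN : 0 < p k (c n.-1) d.
  have := Hc n.-1 ltac:(nlia); have e : (n.-1.+1 = n)%N by nlia.
  by rewrite e (sp_N hl2).
have EaN : 0 < p k (a m.-1) d.
  have := Ha m.-1 ltac:(nlia); have e : (m.-1.+1 = m)%N by nlia.
  by rewrite e (sp_N hl1).
have EBa := L1 (@edge_bounds) Ha Ec1 EcN Na (fs_bnd k) (bd_bnd k).
have EBc := L2 (@edge_bounds) Hc Ea1 EaN Nc (fs_bnd k) (bd_bnd k).
have pos (P F B : R) : 0 < P -> 0 <= F <= lambda ^+ k * f 0%N s ->
    0 <= B <= lambda ^+ k * b 0%N d -> 0 < delta * (P + F + B).
  move=> P0 /andP[F0 _] /andP[B0 _]; apply: mulr_gt0 => //.
  lra.
have wk (x y : R) : 0 <= y -> 0 <= x <= lambda ^+ k * y ->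
    0 <= x <= lambda ^+ k.+1 * y.
  move=> y0 /andP[x0 xy]; rewrite x0 /=; apply: le_trans xy _; exact: lamk_le.
split.
- move=> j hj; rewrite (L1 (@p_upd) k hj).
  by case: (EBa j hj) => h1 h2; apply: pos => //; apply: Ha.
- move=> j hj; rewrite (L2 (@p_upd) k hj).
  by case: (EBc j hj) => h1 h2; apply: pos => //; apply: Hc.
- move=> j hj; rewrite (L1 (@f_upd) k hj).
  have -> := (L1 (@b_upd) k hj).
  have hj1 : (j.-1 < m)%N by nlia.
  have hj2 : (j < m)%N by nlia.
  case: (EBa j.-1 hj1) => h1 _; case: (EBa j hj2) => _ h2.
  split; apply: wk => //; exact: ltW.
- move=> j hj; rewrite (L2 (@f_upd) k hj).
  have -> := (L2 (@b_upd) k hj).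
  have hj1 : (j.-1 < n)%N by nlia.
  have hj2 : (j < n)%N by nlia.
  case: (EBc j.-1 hj1) => h1 _; case: (EBc j hj2) => _ h2.
  split; apply: wk => //; exact: ltW.
Qed.

Lemma pos_edges k :
  [/\ 0 < p k s (a 1), 0 < p k s (c 1), 0 < p k (a m.-1) d & 0 < p k (c n.-1) d].
Proof.
have hm := hm1; have hn := hn1.
case: (bounds k) => Ha Hc _ _; split.
- by have := Ha 0%N ltac:(nlia); rewrite (sp_0 sd hh1 hl1 hu1).
- by have := Hc 0%N ltac:(nlia); rewrite (sp_0 sd hh2 hl2 hu2).
- have := Ha m.-1 ltac:(nlia); have e : (m.-1.+1 = m)%N by nlia.
  by rewrite e (sp_N hl1).
- have := Hc n.-1 ltac:(nlia); have e : (n.-1.+1 = n)%N by nlia.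
  by rewrite e (sp_N hl2).
Qed.

Lemma EB1 k j : (j < m)%N ->
  0 <= fwd_edge_flow E (p k) (f k) (a j) (a j.+1) <= lambda ^+ k * f 0%N s /\
  0 <= bwd_edge_flow E (p k) (b k) (a j) (a j.+1) <= lambda ^+ k * b 0%N d.
Proof.
case: (bounds k) => Ha Hc Na Nc; case: (pos_edges k) => Ea1 Ec1 EaN EcN.
exact: (L1 (@edge_bounds) Ha Ec1 EcN Na (fs_bnd k) (bd_bnd k)).
Qed.

Lemma EB2 k j : (j < n)%N ->
  0 <= fwd_edge_flow E (p k) (f k) (c j) (c j.+1) <= lambda ^+ k * f 0%N s /\
  0 <= bwd_edge_flow E (p k) (b k) (c j) (c j.+1) <= lambda ^+ k * b 0%N d.
Proof.
case: (bounds k) => Ha Hc Na Nc; case: (pos_edges k) => Ea1 Ec1 EaN EcN.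
exact: (L2 (@edge_bounds) Hc Ea1 EaN Nc (fs_bnd k) (bd_bnd k)).
Qed.

Local Notation cc := (f 0%N s + b 0%N d).

Lemma cc_gt0 : 0 < cc. Proof. by rewrite addr_gt0. Qed.

Lemma lamk_ge1 k : 1 <= lambda ^+ k.
Proof. by rewrite exprn_ege1 // ltW. Qed.

Lemma Ps_step k :
  p k.+1 s (a 1) + p k.+1 s (c 1) <=
  delta * (p k s (a 1) + p k s (c 1) + 2%:R * cc * lambda ^+ k).
Proof.
have hm := hm1; have hn := hn1.
have e1 := L1 (@p_upd) k (j := 0%N) ltac:(nlia).
have e2 := L2 (@p_upd) k (j := 0%N) ltac:(nlia).
rewrite (sp_0 sd hh1 hl1 hu1) in e1; rewrite (sp_0 sd hh2 hl2 hu2) in e2.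
rewrite e1 e2 -mulrDr; apply: ler_wpM2l; first exact: ltW.
case: (EB1 k (j := 0%N) ltac:(nlia)); rewrite (sp_0 sd hh1 hl1 hu1) => /andP[h1 h2] /andP[h3 h4].
case: (EB2 k (j := 0%N) ltac:(nlia)); rewrite (sp_0 sd hh2 hl2 hu2) => /andP[h5 h6] /andP[h7 h8].
lra.
Qed.

Lemma Pd_step k :
  p k.+1 (a m.-1) d + p k.+1 (c n.-1) d <=
  delta * (p k (a m.-1) d + p k (c n.-1) d + 2%:R * cc * lambda ^+ k).
Proof.
have hm := hm1; have hn := hn1.
have e1 := L1 (@p_upd) k (j := m.-1) ltac:(nlia).
have e2 := L2 (@p_upd) k (j := n.-1) ltac:(nlia).
have em : (m.-1.+1 = m)%N by nlia.
have en : (n.-1.+1 = n)%N by nlia.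
rewrite em (sp_N hl1) in e1; rewrite en (sp_N hl2) in e2.
rewrite e1 e2 -mulrDr; apply: ler_wpM2l; first exact: ltW.
case: (EB1 k (j := m.-1) ltac:(nlia)); rewrite em (sp_N hl1) => /andP[h1 h2] /andP[h3 h4].
case: (EB2 k (j := n.-1) ltac:(nlia)); rewrite en (sp_N hl2) => /andP[h5 h6] /andP[h7 h8].
lra.
Qed.

Lemma tot_bound (X : nat -> R) u1 v1 u2 v2 :
  E u1 v1 -> E u2 v2 -> X 0%N = p 0%N u1 v1 + p 0%N u2 v2 ->
  (forall k, X k.+1 <= delta * (X k + 2%:R * cc * lambda ^+ k)) ->
  forall k, T1_pos E (p 0%N) (f 0%N s) (b 0%N d) delta <= k%:R ->
  X k * (1 - delta) <= 2%:R * cc * lambda ^+ k.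
Proof.
move=> E1 E2 X0 hX k hT.
have c0 := cc_gt0.
have hr := rec_bound hd0 hd1 (ltW hlam) (C := 2%:R * cc) ltac:(lra) hX k.
have t1 := T1_edge hd0 hd1 c0 (hp0 E1) E1 hT.
have t2 := T1_edge hd0 hd1 c0 (hp0 E2) E2 hT.
rewrite X0 mulrDr in hr.
have l1 := lamk_ge1 k.
have w : delta / (1 - delta) * (1 - delta) = delta.
  by rewrite mulfVK //; apply/eqP => e; move: hd1; rewrite -subr_gt0 e ltxx.
have hd : 0 <= 1 - delta by rewrite subr_ge0 ltW.
have h := ler_wpM2r hd hr.
set A := delta ^+ k * p 0%N u1 v1 + delta ^+ k * p 0%N u2 v2 in h.
set u := 2%:R * cc * lambda ^+ k in h *.
have e : (A + u * (delta / (1 - delta))) * (1 - delta) = A * (1 - delta) + u * delta.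
  by rewrite mulrDl -mulrA w.
rewrite e in h.
have hUU : 2%:R * cc <= u.
  rewrite /u ler_peMr //; apply: mulr_ge0 => //; exact: ltW.
have hA : A * (1 - delta) <= u * (1 - delta).
  apply: ler_wpM2r => //; rewrite /A; lra.
lra.
Qed.

Local Notation r k := (p k s (a 1) / p k s (c 1)).
Local Notation rd k := (p k (a m.-1) d / p k (c n.-1) d).
Local Notation gam := (Num.min (f 0%N s) (b 0%N d) * (1 - delta) * (lambda - 1)
           / (6%:R * cc * lambda ^+ m)).
Local Notation T1 := (T1_pos E (p 0%N) (f 0%N s) (b 0%N d) delta).

Lemma cancel_d (x y : R) : delta * x / (delta * y) = x / y.
Proof.
by rewrite invfM mulrACA divff ?mul1r // lt0r_neq0.
Qed.

Lemma gam_ge0 : 0 <= gam.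
Proof.
have c0 := cc_gt0.
apply: divr_ge0; last by rewrite ltW // !mulr_gt0 // lamk_gt0.
apply: mulr_ge0; last by rewrite subr_ge0 ltW.
apply: mulr_ge0; last by rewrite subr_ge0 ltW.
by rewrite le_min !ltW.
Qed.

Lemma rle (rho x y : R) : 0 < y -> rho <= x / y -> rho * y <= x.
Proof. by move=> y0; rewrite ler_pdivlMr. Qed.

Lemma lam_shift (i j : nat) (x : R) : 0 <= x -> (i < j)%N ->
  lambda * (lambda ^+ i * x) <= lambda ^+ j * x.
Proof.
move=> x0 ij; rewrite mulrA -exprS; apply: ler_wpM2r => //.
by rewrite ler_eXn2l.
Qed.

Lemma Sbound k (P X : R) : (m.-1 <= k)%N ->
  P * (1 - delta) <= 2%:R * cc * lambda ^+ k ->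
  0 <= X <= lambda ^+ k * cc ->
  lambda * (P + X) * (1 - delta) <= 3%:R * cc * lambda ^+ (k - m.-1) * lambda ^+ m.
Proof.
move=> hk hP /andP[X0 Xc].
have e : (k - m.-1 + m = k.+1)%N by nlia.
rewrite -[3%:R * cc * _ * _]mulrA -exprD e exprS.
have l0 : 0 < lambda by apply: lt_trans hlam.
have c0 := cc_gt0.
have hX : X * (1 - delta) <= X by rewrite ler_piMr // ?gerBl ?ltW.
have : (P + X) * (1 - delta) <= 3%:R * cc * lambda ^+ k.
  rewrite mulrDl; have := lamk_gt0 k; nra.
move=> h; rewrite -mulrA; have := ler_wpM2l (ltW l0) h.
by move/le_trans; apply; rewrite le_eqVlt; apply/orP; left; apply/eqP; ring.
Qed.


Lemma r_step_s k rho : (n <= k)%N -> T1 <= k%:R -> 0 < rho ->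
  (forall tau, (k - n.-1 <= tau <= k)%N -> rho <= r tau /\ rho <= rd tau) ->
  rho * (1 + gam) <= r k.+1.
Proof.
move=> hk hT r0 hw.
have hm := hm1; have hn := hn1.
set t1 := (k - m.-1)%N; set t2 := (k - n.-1)%N.
have e1 := L1 (@p_upd) k (j := 0%N) ltac:(nlia).
have e2 := L2 (@p_upd) k (j := 0%N) ltac:(nlia).
have eF1 := L1 (@FA_src) k.
have eF2 := L2 (@FA_src) k.
have eB1 := L1 (@BA_shift) (i := m.-1) (k := k) ltac:(nlia) ltac:(nlia).
rewrite subnn (L1 (@BA_dst)) in eB1.
have eB2 := L2 (@BA_shift) (i := n.-1) (k := k) ltac:(nlia) ltac:(nlia).
rewrite subnn (L2 (@BA_dst)) in eB2.
rewrite eF1 eB1 (sp_0 sd hh1 hl1 hu1) in e1.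
rewrite eF2 eB2 (sp_0 sd hh2 hl2 hu2) in e2.
rewrite e1 e2 cancel_d.
rewrite -/t1 -/t2 [p k s (c 1) + p k s (a 1)]addrC.
rewrite [p t2 (c n.-1) d + p t2 (a m.-1) d]addrC.
have c0 := cc_gt0.
case: (pos_edges k) => Pa Pc _ _.
case: (pos_edges t1) => _ _ Q1 Q2.
case: (pos_edges t2) => _ _ R1 R2.
have w1 : (k - n.-1 <= t1 <= k)%N by rewrite /t1; nlia.
have w2 : (k - n.-1 <= t2 <= k)%N by rewrite /t2; nlia.
have w0 : (k - n.-1 <= k <= k)%N by nlia.
case: (hw _ w0) => hr0 _; case: (hw _ w1) => _ hr1; case: (hw _ w2) => _ hr2.
have hbC : 0 <= b t2 d by case/andP: (bd_bnd t2).
apply: (key_ineq (lam := lambda)) => //.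
- exact: gam_ge0.
- by case/andP: (fs_bnd k).
- rewrite [b t1 d]hbd [b t2 d]hbd; apply: lam_shift; [exact: ltW | rewrite /t1 /t2; nlia].
- exact: rle.
- exact: rle.
- exact: rle.
- rewrite [b t1 d]hbd.
  apply: (cond_ineq (delta := delta) (lam := lambda) (cc := cc)
    (M := Num.min (f 0%N s) (b 0%N d)) (b0 := b 0%N d) (Lm := lambda ^+ t1)
    (mu := lambda ^+ m)).
  + exact: hd0.
  + exact: hd1.
  + exact: hlam.
  + exact: cc_gt0.
  + by rewrite le_min !ltW.
  + by rewrite ge_min lexx orbT.
  + by rewrite lerDr ltW.
  + exact: lamk_ge1.
  + exact: lamk_gt0.
  + apply: Sbound; first by nlia.
      apply: (tot_bound (X := fun kk => p kk s (a 1) + p kk s (c 1))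
         (u1 := s) (v1 := a 1) (u2 := s) (v2 := c 1)).
      * have := g_edge sd hh1 hl1 hu1 hh2 hl2 hu2 hsh hE (j := 0%N).
        by rewrite (sp_0 sd hh1 hl1 hu1); apply; nlia.
      * have := g_edge sd hh2 hl2 hu2 hh1 hl1 hu1 hsh' hE' (j := 0%N).
        by rewrite (sp_0 sd hh2 hl2 hu2); apply; nlia.
      * done.
      * move=> kk; exact: Ps_step.
      * exact: hT.
    case/andP: (fs_bnd k) => h1 h2; rewrite h1 /=; apply: le_trans h2 _.
    by apply: ler_wpM2l; [exact: ltW (lamk_gt0 k) | rewrite lerDl ltW].
  + by [].
Qed.


Lemma r_step_d k rho : (n <= k)%N -> T1 <= k%:R -> 0 < rho ->
  (forall tau, (k - n.-1 <= tau <= k)%N -> rho <= r tau /\ rho <= rd tau) ->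
  rho * (1 + gam) <= rd k.+1.
Proof.
move=> hk hT r0 hw.
have hm := hm1; have hn := hn1.
set t1 := (k - m.-1)%N; set t2 := (k - n.-1)%N.
have em : (m.-1.+1 = m)%N by nlia.
have en : (n.-1.+1 = n)%N by nlia.
have e1 := L1 (@p_upd) k (j := m.-1) ltac:(nlia).
have e2 := L2 (@p_upd) k (j := n.-1) ltac:(nlia).
have eF1 := L1 (@FA_shift) (j := m.-1) (k := k) ltac:(nlia) ltac:(nlia).
rewrite (L1 (@FA_src)) in eF1.
have eF2 := L2 (@FA_shift) (j := n.-1) (k := k) ltac:(nlia) ltac:(nlia).
rewrite (L2 (@FA_src)) in eF2.
rewrite eF1 (L1 (@BA_dst)) em (sp_N hl1) in e1.
rewrite eF2 (L2 (@BA_dst)) en (sp_N hl2) in e2.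
rewrite e1 e2 cancel_d -/t1 -/t2.
rewrite [p k (c n.-1) d + p k (a m.-1) d]addrC [p t2 s (c 1) + p t2 s (a 1)]addrC.
rewrite [p k (a m.-1) d + _ + _]addrAC [p k (c n.-1) d + _ + _]addrAC.
have c0 := cc_gt0.
case: (pos_edges k) => _ _ Pa Pc.
case: (pos_edges t1) => Q1 Q2 _ _.
case: (pos_edges t2) => R1 R2 _ _.
have w1 : (k - n.-1 <= t1 <= k)%N by rewrite /t1; nlia.
have w2 : (k - n.-1 <= t2 <= k)%N by rewrite /t2; nlia.
have w0 : (k - n.-1 <= k <= k)%N by nlia.
case: (hw _ w0) => _ hr0; case: (hw _ w1) => hr1 _; case: (hw _ w2) => hr2 _.
have hbC : 0 <= f t2 s by case/andP: (fs_bnd t2).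
apply: (key_ineq (lam := lambda)) => //.
- exact: gam_ge0.
- by case/andP: (bd_bnd k).
- rewrite [f t1 s]hfs [f t2 s]hfs; apply: lam_shift; [exact: ltW | rewrite /t1 /t2; nlia].
- exact: rle.
- exact: rle.
- exact: rle.
- rewrite [f t1 s]hfs.
  apply: (cond_ineq (delta := delta) (lam := lambda) (cc := cc)
    (M := Num.min (f 0%N s) (b 0%N d)) (b0 := f 0%N s) (Lm := lambda ^+ t1)
    (mu := lambda ^+ m)).
  + exact: hd0.
  + exact: hd1.
  + exact: hlam.
  + exact: cc_gt0.
  + by rewrite le_min !ltW.
  + by rewrite ge_min lexx.
  + by rewrite lerDl ltW.
  + exact: lamk_ge1.
  + exact: lamk_gt0.
  + apply: Sbound; first by nlia.
      apply: (tot_bound (X := fun kk => p kk (a m.-1) d + p kk (c n.-1) d)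
         (u1 := a m.-1) (v1 := d) (u2 := c n.-1) (v2 := d)).
      * have := g_edge sd hh1 hl1 hu1 hh2 hl2 hu2 hsh hE (j := m.-1).
        by rewrite em (sp_N hl1); apply; nlia.
      * have := g_edge sd hh2 hl2 hu2 hh1 hl1 hu1 hsh' hE' (j := n.-1).
        by rewrite en (sp_N hl2); apply; nlia.
      * done.
      * move=> kk; exact: Pd_step.
      * exact: hT.
    case/andP: (bd_bnd k) => h1 h2; rewrite h1 /=; apply: le_trans h2 _.
    by apply: ler_wpM2l; [exact: ltW (lamk_gt0 k) | rewrite lerDr ltW].
  + by [].
Qed.

Lemma T1_ge0 : 0 <= T1.
Proof.
rewrite /T1_pos; elim/big_rec: _ => // i x _ hx.
by rewrite le_max hx orbT.
Qed.

Lemma main_result t : (maxn m n)%:R + T1 <= t%:R ->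
  (1 + gam) * r_min p s d (a 1) (c 1) (a m.-1) (c n.-1) (maxn m n) t <=
  r_min p s d (a 1) (c 1) (a m.-1) (c n.-1) (maxn m n) (t + maxn m n).
Proof.
have hm := hm1; have hn := hn1.
have Lmn : maxn m n = n by apply/maxn_idPr; exact: ltnW.
rewrite Lmn => ht.
have T0 := T1_ge0.
have hnt : (n <= t)%N.
  by rewrite -(ler_nat R); apply: le_trans _ ht; lra.
have hTk k : (t <= k)%N -> T1 <= k%:R.
  move=> tk; apply: le_trans (_ : t%:R <= k%:R); last by rewrite ler_nat.
  by apply: le_trans _ ht; have := ler0n R n; lra.
rewrite /r_min /r_ratio /r_ratio_d.
set rho := \big[Num.min/_]_(i < n) _.
have rpos : 0 < rho.
  rewrite /rho; apply: (big_ind (fun x => 0 < x)).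
  - by case: (pos_edges t) => Pa Pc _ _; rewrite divr_gt0.
  - by move=> x y hx hy; rewrite lt_min hx.
  - move=> i _; case: (pos_edges (t - i)) => Pa Pc Pd1 Pd2.
    by rewrite lt_min !divr_gt0.
have W0 tau : (t - n.-1 <= tau <= t)%N -> rho <= r tau /\ rho <= rd tau.
  move=> htau; have hi : (t - tau < n)%N by nlia.
  have := bigmin_ord_le (fun i : 'I_n => Num.min (r (t - i)) (rd (t - i)))
    (r t) (Ordinal hi).
  rewrite -/rho /= le_min.
  have -> : (t - (t - tau) = tau)%N by nlia.
  by move/andP.
have g0 := gam_ge0.
have rg : rho <= rho * (1 + gam) by rewrite mulrDr mulr1 lerDl mulr_ge0 // ltW.
have claim i : (i <= n.-1)%N -> forall tau, (t - n.-1 <= tau <= t + i)%N ->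
    rho <= r tau /\ rho <= rd tau.
  elim: i => [|i IH] hi tau htau.
    by apply: W0; rewrite addn0 in htau.
  case: (ltnP tau (t + i.+1)) => h.
    by apply: IH; [nlia | nlia].
  have e : tau = (t + i).+1 by nlia.
  have hw : forall tau', (t + i - n.-1 <= tau' <= t + i)%N ->
      rho <= r tau' /\ rho <= rd tau'.
    by move=> tau' h'; apply: IH; [nlia | nlia].
  rewrite e; split; apply: le_trans rg _.
    by apply: r_step_s => //; [nlia | apply: hTk; nlia].
  by apply: r_step_d => //; [nlia | apply: hTk; nlia].
have up k : (t <= k <= t + n.-1)%N ->
    rho * (1 + gam) <= r k.+1 /\ rho * (1 + gam) <= rd k.+1.
  move=> hk.
  have hw : forall tau', (k - n.-1 <= tau' <= k)%N ->
      rho <= r tau' /\ rho <= rd tau'.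
    by move=> tau' h'; apply: (claim n.-1) => //; nlia.
  split; [apply: r_step_s | apply: r_step_d] => //;
    solve [nlia | apply: hTk; nlia].
rewrite mulrC; apply: bigmin_ord_ge.
  have e : (t + n = (t + n.-1).+1)%N by nlia.
  by rewrite e; case: (up (t + n.-1)%N ltac:(nlia)).
move=> i; have hi := ltn_ord i.
have e : (t + n - i = (t + n - i).-1.+1)%N by nlia.
rewrite le_min e; case: (up (t + n - i).-1 ltac:(nlia)) => h1 h2.
by rewrite h1 h2.
Qed.

End Main.

Theorem mainTheorem14 (R : realType) (V : finType) (E : rel V) (s d : V)
    (p1 p2 : seq V) (l : V -> R) (delta lambda : R)
    (p : nat -> V -> V -> R) (f b : nat -> V -> R) :
  two_parallel_paths E s d p1 p2 ->
  let m := (size p1).-1 in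
  let n := (size p2).-1 in
  let L := maxn m n in
  let s1 := nth s p1 1 in
  let s2 := nth s p2 1 in
  let d1 := nth s p1 m.-1 in
  let d2 := nth s p2 n.-1 in
  (m < n)%N ->
  0 < delta < 1 ->
  is_trajectory E s d l delta p f b ->
  (forall v, l v = 0) ->
  (forall u v, E u v -> 0 < p 0%N u v) ->
  1 < lambda ->
  0 < f 0%N s -> 0 < b 0%N d ->
  (forall t, f t s = lambda ^+ t * f 0%N s) ->
  (forall t, b t d = lambda ^+ t * b 0%N d) ->
  (forall v, v != s -> v != d -> 0 <= f 0%N v <= f 0%N s) ->
  (forall v, v != s -> v != d -> 0 <= b 0%N v <= b 0%N d) ->
  forall t : nat,
    L%:R + T1_pos E (p 0%N) (f 0%N s) (b 0%N d) delta <= t%:R ->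
    r_min p s d s1 s2 d1 d2 L (t + L) >=
      (1 + Num.min (f 0%N s) (b 0%N d) * (1 - delta) * (lambda - 1)
           / (6%:R * (f 0%N s + b 0%N d) * lambda ^+ m))
      * r_min p s d s1 s2 d1 d2 L t.
Proof.
move=> [[sd [hh1 hl1 hu1] [hh2 hl2 hu2] hsh _] hE] m n L s1 s2 d1 d2 hmn
  /andP[hd0 hd1] htr hl0 hp0 hlam hfs0 hbd0 hfs hbd hf0 hb0 t ht.
exact: (main_result sd hh1 hl1 hu1 hh2 hl2 hu2 hsh hE hmn hd0 hd1 htr hl0 hp0
  hlam hfs0 hbd0 hfs hbd hf0 hb0 ht).
Qed.
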